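(* Let $w=(w(m))_{m\in2\mathbb{Z}}\in\ell^2(2\mathbb{Z})$, set $V(m)=m\,w(m)$, and for $n\in\mathbb{N}$, $d\in\{n,-n\}$ and $p\in\mathbb{N}$ let $$L(p,d)=\sum_{i_1,\dots,i_p\neq\pm n}\frac{|V(d-i_1)|}{|n^2-i_1^2|}\cdot\frac{|V(i_1-i_2)|}{|n^2-i_2^2|}\cdots\frac{|V(i_{p-1}-i_p)|}{|n^2-i_p^2|},$$ where all summation indices $i_1,\dots,i_p$ range over $n+2\mathbb{Z}$ with $i_\nu\neq\pm n$. Then there exists a sequence of positive numbers $\varepsilon_n\to0$ such that, for all sufficiently large $n$, $$L(s,n)\le\varepsilon_n^s\quad\text{and}\quad L(s,-n)\le\varepsilon_n^s\qquad\forall s\in\mathbb{N}.$$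
   Context: In the application, $w(m)$ are the Fourier coefficients of a $\pi$-periodic $L^2$ function $Q$, $Q(x)=\sum_{m\in2\mathbb{Z}}w(m)e^{imx}$, so that $V(m)$ is (up to a factor $i$) the $m$-th Fourier coefficient of $Q'$; but the statement only uses $w\in\ell^2(2\mathbb{Z})$. *)

(* Defs.v *)
From HB Require Import structures.
From mathcomp Require Import all_boot all_order all_algebra.
From mathcomp Require Import all_classical all_reals all_analysis.
Set Implicit Arguments. Unset Strict Implicit. Unset Printing Implicit Defensive.
Import Order.TTheory GRing.Theory Num.Theory.
Import numFieldNormedType.Exports.
Local Open Scope ring_scope.
Local Open Scope classical_set_scope.

(* w : int -> W is a sequence indexed by integers; only its values on 2Z are
   ever used. V(m) = m * w(m), written w m *~ m. *)

Definition admissible (n i : int) : bool :=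
  [&& (2 %| (i - n))%Z, i != n & i != - n].

Fixpoint chain_term (R : realType) (W : normedZmodType R) (w : int -> W)
    (n prev : int) (s : seq int) : R :=
  match s with
  | [::] => 1
  | i :: s' =>
      (`|w (prev - i) *~ (prev - i)| / `|(n ^+ 2 - i ^+ 2)%:~R : R|)
        * chain_term w n i s'
  end.

Definition Lsum (R : realType) (W : normedZmodType R) (w : int -> W)
    (n : int) (p : nat) (d : int) : \bar R :=
  esum [set t : p.-tuple int | all (admissible n) t]
       (fun t => (chain_term w n d t)%:E).

(* Main.v *)
From Stdlib Require PeanoNat.
Require Import Defs.
From HB Require Import structures.
From mathcomp Require Import all_boot all_order all_algebra.
From mathcomp Require Import all_classical all_reals all_analysis.
From mathcomp Require Import zify ring lra.
Import Order.TTheory GRing.Theory Num.Theory.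
Import numFieldNormedType.Exports.
Local Open Scope ring_scope.
Local Open Scope classical_set_scope.
Set Implicit Arguments. Unset Strict Implicit. Unset Printing Implicit Defensive.

Definition Kf (R : realType) (W : normedZmodType R) (w : int -> W)
  (n prev i : int) : R :=
  `|w (prev - i) *~ (prev - i)| / `|(n ^+ 2 - i ^+ 2)%:~R : R|.

Fixpoint G (R : realType) (W : normedZmodType R) (w : int -> W)
  (n : int) (B : seq int) (p : nat) (d : int) : R :=
  match p with
  | 0%N => 1
  | p'.+1 => \sum_(i <- B) Kf w n d i * G w n B p' i
  end.

Lemma Kf_ge0 (R : realType) (W : normedZmodType R) (w : int -> W) n d i :
  0 <= Kf w n d i.
Proof. by rewrite /Kf divr_ge0. Qed.

Lemma G_ge0 (R : realType) (W : normedZmodType R) (w : int -> W) n B p d :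
  0 <= G w n B p d.
Proof.
elim: p d => [|p IH] d /=; first exact: ler01.
by apply: sumr_ge0 => i _; rewrite mulr_ge0 ?Kf_ge0.
Qed.

Lemma chain_ge0 (R : realType) (W : normedZmodType R) (w : int -> W) n s d :
  0 <= chain_term w n d s.
Proof.
elim: s d => [|i s IH] d /=; first exact: ler01.
by rewrite mulr_ge0 ?IH // divr_ge0.
Qed.

Lemma chain_cons (R : realType) (W : normedZmodType R) (w : int -> W) n p
  (t : p.+1.-tuple int) d :
  chain_term w n d t = Kf w n d (thead t) * chain_term w n (thead t) (behead_tuple t).
Proof. by case: t => [[|x s'] Hs]. Qed.

Lemma lemA (R : realType) (W : normedZmodType R) (w : int -> W) n B :
  uniq B -> forall p (s : seq (p.-tuple int)) d, uniq s ->
  (forall t, t \in s -> all (mem B) t) ->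
  \sum_(t <- s) chain_term w n d t <= G w n B p d.
Proof.
move=> uB; elim=> [|p IH] s d us sB /=.
  case: s us {sB} => [|t1 [|t2 s]] /=; rewrite ?big_nil ?big_cons ?big_nil ?ler01 //.
    by rewrite (tuple0 t1) /= addr0.
  by rewrite (tuple0 t1) (tuple0 t2) inE eqxx.
under eq_bigr do rewrite chain_cons.
have -> : \sum_(t <- s) Kf w n d (thead t) * chain_term w n (thead t) (behead_tuple t)
  = \sum_(i <- B) \sum_(t <- s | thead t == i)
       Kf w n d i * chain_term w n i (behead_tuple t).
  under [RHS]eq_bigr do rewrite big_mkcond.
  rewrite exchange_big /=; apply: eq_big_seq => t ts.

  have tB : thead t \in B.
    have := sB t ts; case: t {ts} => [[|x s'] Hs] //= /andP[].
    by rewrite /thead /tnth /=.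
  rewrite (bigD1_seq (thead t)) //= eqxx big1 ?addr0 // => i /negPf.
  by rewrite eq_sym => ->.
apply: ler_sum => i _.
rewrite -mulr_sumr; apply: ler_wpM2l; first exact: Kf_ge0.
rewrite -big_filter.
rewrite (eq_bigr (fun t => chain_term w n i (behead_tuple t))) //.
rewrite -(big_map (@behead_tuple _ _) xpredT (fun t' => chain_term w n i t')).
apply: IH.
  rewrite map_inj_in_uniq ?filter_uniq // => t1 t2.
  rewrite !mem_filter => /andP[/eqP h1 _] /andP[/eqP h2 _] hb.
  apply: val_inj; move/(congr1 val): hb; move: h1 h2.
  case: t1 => [[|x1 s1] H1]; case: t2 => [[|x2 s2] H2] //=.
  rewrite /thead /tnth /= => -> -> ->. done.
move=> t' /mapP[t]; rewrite mem_filter => /andP[_ ts] ->.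
have := sB t ts; case: t {ts} => [[|x s'] Hs] //= /andP[].
by [].
Qed.


Lemma minmaxM (x y : int) : Num.min x y * Num.max x y = x * y.
Proof.
have [h|h] : (Num.min x y = x /\ Num.max x y = y) \/ (Num.min x y = y /\ Num.max x y = x) by lia.
  by case: h => -> ->.
by case: h => -> ->; rewrite mulrC.
Qed.

Definition mm (R : realType) (n j : int) : R := (Num.min `|n - j| `|n + j|)%:~R.
Definition MM (R : realType) (n j : int) : R := (n + `|j|)%:~R.

Lemma phiE (R : realType) (n j : int) : 0 <= n ->
  `|(n ^+ 2 - j ^+ 2)%:~R : R| = mm R n j * MM R n j.
Proof.
move=> n0; rewrite /mm /MM -intr_norm -rmorphM /=; congr (_%:~R).
have <- : Num.max `|n - j| `|n + j| = n + `|j| by lia.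
rewrite minmaxM -normrM; congr `|_|; ring.
Qed.

Definition Vt (R : realType) (W : normedZmodType R) (w : int -> W) (n i j : int) : R :=
  `|w (i - j) *~ (i - j)| / MM R n j.
Definition Ka (R : realType) (W : normedZmodType R) (w : int -> W) (n i j : int) : R :=
  Vt w n i j / mm R n i.

Lemma Kf_Vt (R : realType) (W : normedZmodType R) (w : int -> W) n i j : 0 <= n ->
  Kf w n i j = Vt w n i j / mm R n j.
Proof.
by move=> n0; rewrite /Kf /Vt phiE // invfM mulrA mulrAC.
Qed.

Definition hh (R : realType) (W : normedZmodType R) (w : int -> W) n B p j : R :=
  G w n B p j / mm R n j.

Lemma G_rec (R : realType) (W : normedZmodType R) (w : int -> W) n B p i : 0 <= n ->
  G w n B p.+1 i = \sum_(j <- B) Vt w n i j * hh w n B p j.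
Proof.
move=> n0 /=; apply: eq_bigr => j _; rewrite Kf_Vt // /hh; ring.
Qed.

Lemma hh_rec (R : realType) (W : normedZmodType R) (w : int -> W) n B p i : 0 <= n ->
  hh w n B p.+1 i = \sum_(j <- B) Ka w n i j * hh w n B p j.
Proof.
move=> n0; rewrite /hh G_rec // mulr_suml; apply: eq_bigr => j _; rewrite /Ka /hh; ring.
Qed.

Lemma CS (R : realType) (I : eqType) (r : seq I) (a b : I -> R) :
  (\sum_(i <- r) a i * b i) ^+ 2 <= (\sum_(i <- r) a i ^+ 2) * (\sum_(i <- r) b i ^+ 2).
Proof.
set A := \sum_(i <- r) a i ^+ 2; set C := \sum_(i <- r) a i * b i.
set Bq := \sum_(i <- r) b i ^+ 2.
have A0 : 0 <= A by apply: sumr_ge0 => i _; exact: sqr_ge0.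
have B0 : 0 <= Bq by apply: sumr_ge0 => i _; exact: sqr_ge0.
have key : forall t, 0 <= t ^+ 2 * A - 2 * t * C + Bq.
  move=> t; have -> : t ^+ 2 * A - 2 * t * C + Bq = \sum_(i <- r) (t * a i - b i) ^+ 2.
    rewrite /A /C /Bq mulr_sumr mulr_sumr -sumrN -!big_split /=.
    by apply: eq_bigr => i _; ring.
  by apply: sumr_ge0 => i _; exact: sqr_ge0.
have [Az|Ap] := eqVneq A 0.
  have a0 : forall i, i \in r -> a i = 0.
    move=> i ir; apply/eqP; rewrite -sqrf_eq0 eq_le sqr_ge0 andbT.
    rewrite -Az /A (big_rem i ir) /= lerDl.
    by apply: sumr_ge0 => j _; exact: sqr_ge0.
  have -> : C = 0.
    by rewrite /C big_seq big1 // => i /a0 ->; rewrite mul0r.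
  by rewrite expr0n /= mulr_ge0.
have Apos : 0 < A by rewrite lt_def Ap A0.
have := key (C / A).
have -> : (C / A) ^+ 2 * A - 2 * (C / A) * C + Bq = Bq - C ^+ 2 / A.
  by field.
rewrite subr_ge0 ler_pdivrMr // => h.
by rewrite mulrC.
Qed.

Definition hq (R : realType) (W : normedZmodType R) (w : int -> W) n B p : R :=
  \sum_(j <- B) hh w n B p j ^+ 2.

Definition Q2 (R : realType) (W : normedZmodType R) (w : int -> W) n B : R :=
  \sum_(i <- B) \sum_(j <- B) Ka w n i j ^+ 2.

Definition U2 (R : realType) (W : normedZmodType R) (w : int -> W) n B d : R :=
  \sum_(j <- B) Vt w n d j ^+ 2.

Definition V2 (R : realType) n B : R := \sum_(j <- B) (mm R n j)^-1 ^+ 2.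

Lemma hq_rec (R : realType) (W : normedZmodType R) (w : int -> W) n B p : 0 <= n ->
  hq w n B p.+1 <= Q2 w n B * hq w n B p.
Proof.
move=> n0; rewrite /hq /Q2 mulr_suml; apply: ler_sum => i _.
by rewrite hh_rec //; apply: CS.
Qed.

Lemma hq_bound (R : realType) (W : normedZmodType R) (w : int -> W) n B p : 0 <= n ->
  hq w n B p <= Q2 w n B ^+ p * V2 R n B.
Proof.
move=> n0; elim: p => [|p IH].
  by rewrite expr0 mul1r /hq /V2 /hh /= le_eqVlt; apply/orP; left; apply/eqP;
     apply: eq_bigr => j _; rewrite div1r.
apply: le_trans (hq_rec _ _ _ n0) _.
rewrite exprS -mulrA; apply: ler_wpM2l => //.
rewrite /Q2; apply: sumr_ge0 => i _; apply: sumr_ge0 => j _; exact: sqr_ge0.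
Qed.

Lemma G_eps (R : realType) (W : normedZmodType R) (w : int -> W) n B d (e : R) :
  0 <= n -> 0 <= e -> U2 w n B d * V2 R n B <= e ^+ 2 -> Q2 w n B <= e ^+ 2 ->
  forall p, G w n B p d <= e ^+ p.
Proof.
move=> n0 e0 hUV hQ [|p]; first by rewrite expr0.
have G0 := G_ge0 w n B p.+1 d.
rewrite -(ler_sqr (x:= G w n B p.+1 d)) ?nnegrE ?exprn_ge0 //.
have Q0 : 0 <= Q2 w n B.
  rewrite /Q2; apply: sumr_ge0 => i _; apply: sumr_ge0 => j _; exact: sqr_ge0.
have U0 : 0 <= U2 w n B d by apply: sumr_ge0 => j _; exact: sqr_ge0.
apply: (@le_trans _ _ (U2 w n B d * hq w n B p)).
  by rewrite G_rec //; apply: CS.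
apply: (@le_trans _ _ (U2 w n B d * (Q2 w n B ^+ p * V2 R n B))).
  by apply: ler_wpM2l => //; apply: hq_bound.
rewrite mulrCA mulrC -exprM mulnC exprM exprS.
apply: ler_pM => //.
- by rewrite mulr_ge0 // /V2 sumr_ge0 // => j _; exact: sqr_ge0.
- by rewrite exprn_ge0.
- by apply: (lerXn2r p); rewrite ?nnegrE ?exprn_ge0.
Qed.

Lemma sum_sub (R : realType) (T : eqType) (s r : seq T) (f : T -> R) :
  uniq s -> {subset s <= r} -> uniq r -> (forall x, 0 <= f x) ->
  \sum_(x <- s) f x <= \sum_(x <- r) f x.
Proof.
move=> us sr ur f0; rewrite [leRHS](bigID (mem s)) /=.
have -> : \sum_(x <- r | x \in s) f x = \sum_(x <- s) f x.
  rewrite -big_filter; apply: perm_big; apply: uniq_perm; rewrite ?filter_uniq //.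
  by move=> x; rewrite mem_filter; case xs: (x \in s) => //=; rewrite sr.
by rewrite lerDl sumr_ge0.
Qed.

Lemma inv_sq_sum (R : realType) (K : nat) :
  \sum_(k <- iota 1 K) ((k%:R : R)^-1) ^+ 2 <= 2 - 2 / (K.+1)%:R.
Proof.
elim: K => [|K IH]; first by rewrite big_nil /= divr1 subrr.
have -> : iota 1 K.+1 = iota 1 K ++ [:: K.+1] by rewrite -(addn1 K) iotaD /= add1n addn1.
rewrite big_cat big_seq1 /=.
apply: le_trans (lerD IH (lexx _)) _.
rewrite -subr_ge0.
have -> : 2 - 2 / (K.+2)%:R - (2 - 2 / (K.+1)%:R + ((K.+1)%:R)^-1 ^+ 2 : R)
   = (K%:R) / ((K.+1)%:R ^+ 2 * (K.+2)%:R).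
  rewrite -[K.+2]addn2 -[K.+1]addn1 !natrD; field.
  have hK := ler0n R K; by apply/andP; split; apply: lt0r_neq0; lra.
by rewrite divr_ge0 // mulr_ge0.
Qed.

Lemma L0 (R : realType) (s : seq int) : uniq s -> all (fun z => z != 0) s ->
  \sum_(z <- s) ((z%:~R : R)^-1) ^+ 2 <= 4.
Proof.
move=> us s0.
set K := (\sum_(z <- s) `|z|)%N.
set r := map (fun k : nat => k%:Z) (iota 1 K) ++ map (fun k : nat => - k%:Z) (iota 1 K).
have zK : forall z, z \in s -> (`|z| <= K)%N.
  move=> z zs; rewrite /K (big_rem z zs) /=; exact: leq_addr.
apply: (@le_trans _ _ (\sum_(z <- r) ((z%:~R : R)^-1) ^+ 2)).
  apply: sum_sub => //; last by move=> x; exact: sqr_ge0.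
    move=> z zs; have := zK z zs; have := allP s0 z zs.
    rewrite mem_cat; case: z {zs} => [k|k] /= hk hK.
      apply/orP; left; apply/mapP; exists k => //.
      by rewrite mem_iota; lia.
    apply/orP; right; apply/mapP; exists k.+1; first by rewrite mem_iota; lia.
    by rewrite NegzE.
  rewrite cat_uniq !map_inj_uniq ?iota_uniq //; last by move=> x y; lia.
    apply/and3P; split => //; apply/hasPn => z /mapP [k]; rewrite mem_iota => hk ->.
    by apply/mapP => -[k' ]; rewrite mem_iota => hk' /eqP; lia.
  by move=> x y; lia.
rewrite big_cat /= !big_map.
have e : \sum_(k <- iota 1 K) (((- k%:Z)%:~R : R)^-1) ^+ 2
  = \sum_(k <- iota 1 K) ((k%:R : R)^-1) ^+ 2.
  by apply: eq_bigr => k _; rewrite rmorphN /= invrN sqrrN.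
rewrite e.
have e2 : \sum_(k <- iota 1 K) (((k%:Z)%:~R : R)^-1) ^+ 2
  = \sum_(k <- iota 1 K) ((k%:R : R)^-1) ^+ 2 by [].
rewrite e2.
have h := inv_sq_sum R K.
have : 2 - 2 / (K.+1)%:R <= (2 : R) by rewrite lerBlDr lerDl divr_ge0.
move=> h2; have h3 := le_trans h h2. lra.
Qed.

Unset Implicit Arguments.
Lemma P1 (R : realFieldType) (a x M n N : R) : 0 < n -> n <= M -> 0 <= a -> a <= N -> 0 <= x ->
  (a * x / M) ^+ 2 <= (N / n) ^+ 2 * x ^+ 2.
Proof.
move=> n0 nM a0 aN x0.
have M0 : 0 < M by lra.
have h1 : M^-1 <= n^-1 by rewrite lef_pV2 ?posrE.
have h2 : a * x <= N * x by apply: ler_wpM2r.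
have h3 : a * x / M <= a * x / n by apply: ler_wpM2l => //; rewrite mulr_ge0.
have h4 : a * x / n <= N / n * x.
  rewrite mulrAC; apply: ler_wpM2r => //; apply: ler_wpM2r => //; rewrite invr_ge0; lra.
have h5 : 0 <= a * x / M by rewrite divr_ge0 ?mulr_ge0 //; lra.
rewrite -exprMn; apply: lerXn2r; rewrite ?nnegrE //; try lra.
Qed.
Lemma P2 (R : realFieldType) (a x M : R) : 0 < M -> 0 <= a -> a <= M -> 0 <= x ->
  (a * x / M) ^+ 2 <= x ^+ 2.
Proof.
move=> M0 a0 aM x0.
have h : a * x / M <= x by rewrite ler_pdivrMr // mulrC; apply: ler_wpM2l.
have h5 : 0 <= a * x / M by rewrite divr_ge0 ?mulr_ge0 //; lra.
apply: lerXn2r; rewrite ?nnegrE //; lra.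
Qed.
Lemma P3 (R : realFieldType) (a x M m n N : R) : 0 < m -> 0 < n -> n <= M -> 0 <= a -> a <= N -> 0 <= x ->
  (a * x / M / m) ^+ 2 <= (N / n) ^+ 2 * (m^-1) ^+ 2 * x ^+ 2.
Proof.
move=> m0 n0 nM a0 aN x0.
rewrite exprMn (mulrAC _ (m^-1 ^+ 2)); apply: ler_wpM2r; first exact: sqr_ge0.
exact: P1.
Qed.
Lemma P4 (R : realFieldType) (a x M m m' : R) : 0 < m -> 0 < m' -> m' <= M -> 0 <= a -> a <= m + M -> 0 <= x ->
  (a * x / M / m) ^+ 2 <= 2 * x ^+ 2 * ((m'^-1) ^+ 2 + (m^-1) ^+ 2).
Proof.
move=> m0 m'0 mM a0 aM x0.
have M0 : 0 < M by lra.
have h : a * x / M / m <= x * (m'^-1 + m^-1).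
  have e : x * (M^-1 + m^-1) = (m + M) * x / M / m by field; apply/andP; split; apply: lt0r_neq0.
  apply: (@le_trans _ _ (x * (M^-1 + m^-1))).
    rewrite e; apply: ler_wpM2r; rewrite ?invr_ge0; try lra.
    apply: ler_wpM2r; rewrite ?invr_ge0; try lra.
    by apply: ler_wpM2r.
  apply: ler_wpM2l => //; apply: lerD => //; rewrite lef_pV2 ?posrE //.
have h0 : 0 <= a * x / M / m by rewrite !divr_ge0 ?mulr_ge0 //; lra.
apply: (@le_trans _ _ ((x * (m'^-1 + m^-1)) ^+ 2)).
  by apply: lerXn2r; rewrite ?nnegrE //; exact: le_trans h0 h.
set p := m'^-1; set q := m^-1.
have hpq : (p + q) ^+ 2 <= 2 * (p ^+ 2 + q ^+ 2).
  have := sqr_ge0 (p - q); rewrite !expr2 => hh; nra.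
rewrite exprMn; have -> : 2 * x ^+ 2 * (p ^+ 2 + q ^+ 2) = x ^+ 2 * (2 * (p ^+ 2 + q ^+ 2)) by ring.
apply: ler_wpM2l => //; exact: sqr_ge0.
Qed.

Set Implicit Arguments.

Lemma normWz (R : numDomainType) (W : normedZmodType R) (x : W) (m : int) :
  `|x *~ m| = `|m%:~R : R| * `|x|.
Proof.
case: m => k.
  by rewrite -pmulrn normrMn -mulr_natl normr_nat.
by rewrite NegzE mulrNz normrN -pmulrn normrMn -mulr_natl normrN normr_nat.
Qed.

Lemma mm_gt0 (R : realType) (n i : int) : admissible n i -> 0 < mm R n i.
Proof. by case/and3P => _ /eqP h1 /eqP h2; rewrite /mm ltr0z; lia. Qed.

Lemma MM_ge (R : realType) (n j : int) : n%:~R <= MM R n j.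
Proof. by rewrite /MM ler_int; lia. Qed.

Lemma mm_le_MM (R : realType) (n j : int) : 0 <= n -> mm R n j <= MM R n j.
Proof. by move=> n0; rewrite /mm /MM ler_int; lia. Qed.

Lemma dist1 (R : realType) (n i j : int) : 0 <= n ->
  `|(i - j)%:~R : R| <= mm R n i + MM R n j.
Proof. by move=> n0; rewrite -intr_norm /mm /MM -rmorphD ler_int; lia. Qed.

Lemma dist2 (R : realType) (n d j : int) : 0 <= n -> d = n \/ d = - n ->
  `|(d - j)%:~R : R| <= MM R n j.
Proof. by move=> n0 hd; rewrite -intr_norm /MM ler_int; lia. Qed.

Lemma V2_bound (R : realType) (n : int) B : uniq B -> all (admissible n) B ->
  V2 R n B <= 8.
Proof.
move=> uB aB.
have h : forall j, admissible n j ->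
    (mm R n j)^-1 ^+ 2 <= ((n - j)%:~R : R)^-1 ^+ 2 + ((n + j)%:~R : R)^-1 ^+ 2.
  move=> j _.
  have e : forall z : int, ((`|z|)%:~R : R)^-1 ^+ 2 = ((z%:~R : R)^-1) ^+ 2.
    by move=> z; rewrite intr_norm -normfV real_normK // num_real.
  have [hm|hm] : Num.min `|n - j| `|n + j| = `|n - j| \/
                 Num.min `|n - j| `|n + j| = `|n + j| by lia.
    by rewrite /mm hm e lerDl sqr_ge0.
  by rewrite /mm hm e lerDr sqr_ge0.
apply: (@le_trans _ _ (\sum_(j <- B) (((n - j)%:~R : R)^-1 ^+ 2 + ((n + j)%:~R : R)^-1 ^+ 2))).
  rewrite /V2 big_seq [leRHS]big_seq; apply: ler_sum => j jB; apply: h.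
  exact: (allP aB).
rewrite big_split /= (_ : (8 : R) = 4 + 4); last by lra.
apply: lerD.
  rewrite -(big_map (fun j => n - j) xpredT (fun z => ((z%:~R : R)^-1) ^+ 2)).
  apply: L0; first by rewrite map_inj_uniq // => x y; lia.
  apply/allP => z /mapP [j jB ->]; have := allP aB j jB.
  by case/and3P => _ /eqP h1 /eqP h2; apply/eqP; lia.
rewrite -(big_map (fun j => n + j) xpredT (fun z => ((z%:~R : R)^-1) ^+ 2)).
apply: L0; first by rewrite map_inj_uniq // => x y; lia.
apply/allP => z /mapP [j jB ->]; have := allP aB j jB.
by case/and3P => _ /eqP h1 /eqP h2; apply/eqP; lia.
Qed.

Definition Hyp (R : realType) (W : normedZmodType R) (w : int -> W) (P : pred int) (X : R) :=
  forall s, uniq s -> all (fun z => (2 %| z)%Z && P z) s -> \sum_(z <- s) `|w z| ^+ 2 <= X.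

Lemma sumS (R : realType) (W : normedZmodType R) (w : int -> W) n B i (X : R) (P : pred int) :
  uniq B -> all (admissible n) B -> (2 %| i - n)%Z -> Hyp w P X ->
  \sum_(j <- B | P (i - j)) `|w (i - j)| ^+ 2 <= X.
Proof.
move=> uB aB hi H.
rewrite -(big_map (fun j => i - j) P (fun z => `|w z| ^+ 2)) -big_filter.
apply: H; first by rewrite filter_uniq // map_inj_uniq // => x y; lia.
apply/allP => z; rewrite mem_filter => /andP [Pz /mapP [j jB ez]].
rewrite Pz andbT ez; have := allP aB j jB; case/and3P => hj _ _; lia.
Qed.

Lemma sumS' (R : realType) (W : normedZmodType R) (w : int -> W) n B j (X : R) (P : pred int) :
  uniq B -> all (admissible n) B -> (2 %| j - n)%Z -> Hyp w P X ->
  \sum_(i <- B | P (i - j)) `|w (i - j)| ^+ 2 <= X.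
Proof.
move=> uB aB hi H.
rewrite -(big_map (fun i => i - j) P (fun z => `|w z| ^+ 2)) -big_filter.
apply: H; first by rewrite filter_uniq // map_inj_uniq // => x y; lia.
apply/allP => z; rewrite mem_filter => /andP [Pz /mapP [i iB ez]].
rewrite Pz andbT ez; have := allP aB i iB; case/and3P => hj _ _; lia.
Qed.

Lemma X_ge0 (R : realType) (W : normedZmodType R) (w : int -> W) P (X : R) :
  Hyp w P X -> 0 <= X.
Proof. by move=> H; have := H [::] isT isT; rewrite big_nil. Qed.

Lemma U2_bound (R : realType) (W : normedZmodType R) (w : int -> W) n B d (N : int) (S T : R) :
  0 < n -> d = n \/ d = - n -> uniq B -> all (admissible n) B ->
  Hyp w (fun z => `|z| <= N) S -> Hyp w (fun z => ~~ (`|z| <= N)) T ->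
  U2 w n B d <= (N%:~R / n%:~R) ^+ 2 * S + T.
Proof.
move=> n0 hd uB aB HS HT.
have hdn : (2 %| d - n)%Z by lia.
rewrite /U2 (bigID (fun j => `|d - j| <= N)) /=; apply: lerD.
  apply: (@le_trans _ _ (\sum_(j <- B | `|d - j| <= N)
                           (N%:~R / n%:~R) ^+ 2 * `|w (d - j)| ^+ 2)).
    apply: ler_sum => j hj; rewrite /Vt normWz.
    apply: P1; rewrite ?normr_ge0 ?ltr0z ?MM_ge //.
    by rewrite -intr_norm ler_int.
  rewrite -mulr_sumr; apply: ler_wpM2l; first exact: sqr_ge0.
  exact: sumS uB aB hdn HS.
apply: (@le_trans _ _ (\sum_(j <- B | ~~ (`|d - j| <= N)) `|w (d - j)| ^+ 2)).
  apply: ler_sum => j hj; rewrite /Vt normWz.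
  apply: P2; rewrite ?normr_ge0 ?dist2 //; last by lia.
  by apply: lt_le_trans (MM_ge R n j); rewrite ltr0z.
exact: sumS uB aB hdn HT.
Qed.

Lemma Q2_bound (R : realType) (W : normedZmodType R) (w : int -> W) n B (N : int) (S T : R) :
  0 < n -> uniq B -> all (admissible n) B ->
  Hyp w (fun z => `|z| <= N) S -> Hyp w (fun z => ~~ (`|z| <= N)) T ->
  Q2 w n B <= (N%:~R / n%:~R) ^+ 2 * S * 8 + 32 * T.
Proof.
move=> n0 uB aB HS HT.
have S0 := X_ge0 HS; have T0 := X_ge0 HT.
have n0' : 0 <= n by lia.
set c := (N%:~R / n%:~R : R) ^+ 2.
have c0 : 0 <= c by exact: sqr_ge0.
set F := fun i j => 2 * `|w (i - j)| ^+ 2 * (mm R n j)^-1 ^+ 2.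
have step : forall i, i \in B -> \sum_(j <- B) Ka w n i j ^+ 2 <=
    c * (mm R n i)^-1 ^+ 2 * S + 2 * (mm R n i)^-1 ^+ 2 * T
    + \sum_(j <- B | ~~ (`|i - j| <= N)) F i j.
  move=> i iB; have ai := allP aB i iB.
  have hi : (2 %| i - n)%Z by case/and3P: ai.
  have mi := mm_gt0 R ai.
  rewrite (bigID (fun j => `|i - j| <= N)) /= -addrA; apply: lerD.
    apply: (@le_trans _ _ (\sum_(j <- B | `|i - j| <= N)
                           c * (mm R n i)^-1 ^+ 2 * `|w (i - j)| ^+ 2)).
      apply: ler_sum => j hj; rewrite /Ka /Vt normWz.
      apply: P3; rewrite ?normr_ge0 ?ltr0z ?MM_ge //.
      - by have := mi; rewrite /mm ltr0z.
      - by rewrite -intr_norm ler_int.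
    rewrite -mulr_sumr; apply: ler_wpM2l; first by rewrite mulr_ge0 // sqr_ge0.
    exact: sumS uB aB hi HS.
  apply: (@le_trans _ _ (\sum_(j <- B | ~~ (`|i - j| <= N))
          (F i j + 2 * (mm R n i)^-1 ^+ 2 * `|w (i - j)| ^+ 2))).
    rewrite big_seq_cond [leRHS]big_seq_cond; apply: ler_sum => j /andP [jB hj].
    have aj := allP aB j jB; have mj := mm_gt0 R aj.
    rewrite /Ka /Vt normWz /F.
    have := P4 _ (`|(i - j)%:~R : R|) (`|w (i - j)|) (MM R n j) (mm R n i) (mm R n j) mi mj (@mm_le_MM R n j n0') (normr_ge0 _) (@dist1 R n i j n0') (normr_ge0 _).
    move=> h; apply: le_trans h _; rewrite le_eqVlt; apply/orP; left; apply/eqP; ring.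
  rewrite big_split /= addrC; apply: lerD => //.
  rewrite -mulr_sumr; apply: ler_wpM2l; first by rewrite mulr_ge0 // sqr_ge0.
  exact: sumS uB aB hi HT.
apply: (@le_trans _ _ (\sum_(i <- B) (c * (mm R n i)^-1 ^+ 2 * S + 2 * (mm R n i)^-1 ^+ 2 * T
    + \sum_(j <- B | ~~ (`|i - j| <= N)) F i j))).
  by rewrite /Q2 [leLHS]big_seq [leRHS]big_seq; apply: ler_sum => i iB; apply: step.
have ex : \sum_(i <- B) \sum_(j <- B | ~~ (`|i - j| <= N)) F i j
        = \sum_(j <- B) \sum_(i <- B | ~~ (`|i - j| <= N)) F i j.
  under eq_bigr do rewrite big_mkcond.
  rewrite exchange_big; apply: eq_bigr => j _.
  by rewrite [RHS]big_mkcond.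
have V8 := @V2_bound R n B uB aB.
have V0 : 0 <= V2 R n B by apply: sumr_ge0 => j _; exact: sqr_ge0.
rewrite !big_split /= ex.
have e1 : \sum_(i <- B) c * (mm R n i)^-1 ^+ 2 * S = c * S * V2 R n B.
  by rewrite /V2 mulr_sumr; apply: eq_bigr => i _; ring.
have e2 : \sum_(i <- B) 2 * (mm R n i)^-1 ^+ 2 * T = 2 * T * V2 R n B.
  by rewrite /V2 mulr_sumr; apply: eq_bigr => i _; ring.
have e3 : \sum_(j <- B) \sum_(i <- B | ~~ (`|i - j| <= N)) F i j <= 2 * T * V2 R n B.
  rewrite /V2 mulr_sumr big_seq [leRHS]big_seq; apply: ler_sum => j jB.
  have aj := allP aB j jB; have hj : (2 %| j - n)%Z by case/and3P: aj.
  rewrite /F.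
  have -> : \sum_(i <- B | ~~ (`|i - j| <= N)) 2 * `|w (i - j)| ^+ 2 * (mm R n j)^-1 ^+ 2
    = 2 * (mm R n j)^-1 ^+ 2 * \sum_(i <- B | ~~ (`|i - j| <= N)) `|w (i - j)| ^+ 2.
    by rewrite mulr_sumr; apply: eq_bigr => i _; ring.
  rewrite [leRHS](_ : _ = 2 * (mm R n j)^-1 ^+ 2 * T); last by ring.
  apply: ler_wpM2l; first by rewrite mulr_ge0 // sqr_ge0.
  exact: sumS' uB aB hj HT.
rewrite e1 e2.
have h1 : c * S * V2 R n B <= c * S * 8 by apply: ler_wpM2l => //; rewrite mulr_ge0.
have h2 : 2 * T * V2 R n B <= 2 * T * 8 by apply: ler_wpM2l => //; rewrite mulr_ge0.
lra.
Qed.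

Lemma seq_le_esum (R : realType) (T : choiceType) (D : set T) (f : T -> R) (s : seq T) :
  uniq s -> (forall z, z \in s -> D z) -> (forall x, 0 <= f x) ->
  ((\sum_(z <- s) f z)%:E <= esum D (fun z => (f z)%:E))%E.
Proof.
move=> us sD f0; apply: esum_ge; exists [set` s].
  by split; [exact: finite_seq | move=> z /= /sD].
by rewrite -sumEFin fsbig_seq.
Qed.

Lemma esum_fin (R : realType) (T : choiceType) (D : set T) (f : T -> R) :
  (forall x, 0 <= f x) -> summable D (fun z => (f z)%:E) ->
  esum D (fun z => (f z)%:E) = (fine (esum D (fun z => (f z)%:E)))%:E.
Proof.
move=> f0 hs; rewrite fineK // ge0_fin_numE ?esum_ge0 //; last by move=> x _; rewrite lee_fin.
move: hs; rewrite /summable; congr (_ < _)%E; apply: eq_esum => x _.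
by rewrite gee0_abs // lee_fin.
Qed.

Lemma tail_small (R : realType) (D : set int) (f : int -> R) (eta : R) :
  (forall x, 0 <= f x) -> summable D (fun z => (f z)%:E) -> 0 < eta ->
  exists N0 : nat, forall N : nat, (N0 <= N)%N ->
    (esum (D `&` ~` [set z : int | (`|z| <= N%:Z)%R]) (fun z => (f z)%:E) <= eta%:E)%E.
Proof.
move=> f0 hs eta0.
have tE := esum_fin f0 hs.
set tot := esum D (fun z => (f z)%:E) in tE.
have tf : tot \is a fin_num by rewrite tE.
have [x [X [finX XD] <-] hx] := ub_ereal_sup_adherent eta0 tf.
exists (\sum_(z <- finmap.enum_fset (fset_set X)) `|z|)%N => N hN.
have XB : X `<=` D `&` [set z : int | (`|z| <= N%:Z)%R].
  move=> z Xz; split; first exact: XD.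
  have zX : z \in finmap.enum_fset (fset_set X).
    have := in_fset_set finX z; rewrite [in X in X = _ -> _]unfold_in /=.
    by rewrite /finmap.pred_of_finset => ->; rewrite inE.
  rewrite /= (big_rem z zX) /= in hN; rewrite /=; lia.
have ha : (\sum_(i \in X) (f i)%:E <= esum (D `&` [set z : int | (`|z| <= N%:Z)%R]) (fun z => (f z)%:E))%E.
  by apply: esum_ge; exists X.
have hID : tot = (esum (D `&` [set z : int | (`|z| <= N%:Z)%R]) (fun z => (f z)%:E)
   + esum (D `&` ~` [set z : int | (`|z| <= N%:Z)%R]) (fun z => (f z)%:E))%E.
  by apply: esumID => i _; rewrite lee_fin.
set a := esum (D `&` [set z : int | (`|z| <= N%:Z)%R]) _ in ha hID.
set b := esum (D `&` ~` [set z : int | (`|z| <= N%:Z)%R]) _ in hID *.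
have a0 : (0 <= a)%E by apply: esum_ge0 => i _; rewrite lee_fin.
have b0 : (0 <= b)%E by apply: esum_ge0 => i _; rewrite lee_fin.
rewrite fsumEFin // in ha hx.
have afin : a \is a fin_num.
  rewrite ge0_fin_numE //; apply: (@le_lt_trans _ _ tot); last by rewrite tE ltry.
  by rewrite hID leeDl.
have bfin : b \is a fin_num.
  rewrite ge0_fin_numE //; apply: (@le_lt_trans _ _ tot); last by rewrite tE ltry.
  by rewrite hID leeDr.
have hx' : (tot - eta%:E < (\sum_(i \in X) f i)%:E)%E by exact: hx.
move: hID hx' ha; rewrite -(fineK afin) -(fineK bfin) tE -EFinD -EFinB !lee_fin !lte_fin.
move=> [->] h1 h2; lra.
Qed.

Lemma in_fsetX (T : choiceType) (X : set T) (z : T) : finite_set X ->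
  z \in finmap.enum_fset (fset_set X) -> X z.
Proof.
move=> finX; have := in_fset_set finX z; rewrite [in X in X = _ -> _]unfold_in /=.
by rewrite /finmap.pred_of_finset => -> ; rewrite inE.
Qed.

Lemma Lsum_bound (R : realType) (W : normedZmodType R) (w : int -> W) (n : int)
  (N : int) (S T e : R) (d : int) :
  0 < n -> d = n \/ d = - n -> 0 <= e ->
  Hyp w (fun z => `|z| <= N) S -> Hyp w (fun z => ~~ (`|z| <= N)) T ->
  8 * ((N%:~R / n%:~R) ^+ 2 * S + 4 * T) <= e ^+ 2 ->
  forall s, (Lsum w n s d <= (e ^+ s)%:E)%E.
Proof.
move=> n0 hd e0 HS HT hE s.
have S0 := X_ge0 HS; have T0 := X_ge0 HT.
rewrite /Lsum /esum; apply: ge_ereal_sup => _ [X [finX XI] <-].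
rewrite fsbig_finite //= sumEFin lee_fin.
set sq := finmap.enum_fset (fset_set X).
have usq : uniq sq by exact: finmap.fset_uniq.
have sqX : forall t, t \in sq -> all (admissible n) t.
  by move=> t /(in_fsetX finX) /XI.
set B := undup (flatten (map (fun t : s.-tuple int => tval t) sq)).
have uB : uniq B by exact: undup_uniq.
have aB : all (admissible n) B.
  apply/allP => i; rewrite /B mem_undup => /flattenP [l /mapP [t tsq ->] it].
  exact: (allP (sqX t tsq)).
apply: le_trans (@lemA R W w n B uB s sq d usq _) _.
  move=> t tsq; apply/allP => i it; change (i \in B); rewrite /B mem_undup; apply/flattenP.
  by exists (tval t) => //; apply/mapP; exists t.
have n0' : 0 <= n by lia.
have hU := U2_bound n0 hd uB aB HS HT.
have hQ := Q2_bound n0 uB aB HS HT.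
have hV := @V2_bound R n B uB aB.
have V0 : 0 <= V2 R n B by apply: sumr_ge0 => j _; exact: sqr_ge0.
have U0 : 0 <= U2 w n B d by apply: sumr_ge0 => j _; exact: sqr_ge0.
apply: G_eps => //.
  apply: le_trans hE.
  apply: (@le_trans _ _ (((N%:~R / n%:~R) ^+ 2 * S + T) * 8)).
    by apply: ler_pM.
  have c0 : 0 <= (N%:~R / n%:~R : R) ^+ 2 by exact: sqr_ge0.
  have := mulr_ge0 c0 S0; lra.
apply: le_trans hE; apply: le_trans hQ _.
have c0 : 0 <= (N%:~R / n%:~R : R) ^+ 2 by exact: sqr_ge0.
have := mulr_ge0 c0 S0; lra.
Qed.

Unset Implicit Arguments.
Theorem lemma2 (R : realType) (W : normedZmodType R) (w : int -> W) :
  summable [set m : int | (2 %| m)%Z] (fun m => (`|w m| ^+ 2)%:E) ->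
  exists eps : nat -> R,
    (forall n, 0 < eps n) /\ eps @ \oo --> 0 /\
    \forall n \near \oo, forall s : nat,
      (Lsum w n%:Z s n%:Z <= (eps n ^+ s)%:E)%E /\
      (Lsum w n%:Z s (- n%:Z) <= (eps n ^+ s)%:E)%E.
Proof.
move=> hs.
set D := [set m : int | (2 %| m)%Z] in hs *.
set f := fun m : int => `|w m| ^+ 2 : R.
have f0 : forall x, 0 <= f x by move=> x; exact: sqr_ge0.
have hs' : summable D (fun z => (f z)%:E) by exact: hs.
set Stot := fine (esum D (fun z => (f z)%:E)).
set Tt := fun N : nat => fine (esum (D `&` ~` [set z : int | (`|z| <= N%:Z)%R]) (fun z => (f z)%:E)).
set Nn := fun n : nat => PeanoNat.Nat.sqrt n.
set E := fun n : nat => 8 * ((((Nn n)%:Z)%:~R / (n%:Z)%:~R : R) ^+ 2 * Stot + 4 * Tt (Nn n)).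
set eps := fun n : nat => Num.sqrt (E n + (n.+1%:R)^-1).
have HS : forall N : int, Hyp w (fun z => `|z| <= N) Stot.
  move=> N s us hsA; rewrite -lee_fin -(esum_fin f0 hs').
  apply: seq_le_esum => // z zs; have := allP hsA z zs; case/andP => h _; exact: h.
have sub : forall N : nat, summable (D `&` ~` [set z : int | (`|z| <= N%:Z)%R]) (fun z => (f z)%:E).
  move=> N.
  apply: le_lt_trans hs'; apply: (@le_trans _ _ (esum (D `&` ~` [set z : int | (`|z| <= N%:Z)%R]) (fun z => `|(f z)%:E|%E)
     + esum (D `&` [set z : int | (`|z| <= N%:Z)%R]) (fun z => `|(f z)%:E|%E))%E).
    by rewrite leeDl // esum_ge0.
  by rewrite addeC -esumID.
have HT : forall N : nat, Hyp w (fun z => ~~ (`|z| <= N%:Z)) (Tt N).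
  move=> N s us hsA; rewrite -lee_fin.
  rewrite -(esum_fin f0 (sub N)).
  apply: seq_le_esum => // z zs; have := allP hsA z zs; case/andP => h1 h2; split => //=.
  by apply/negP.
have S0 : 0 <= Stot := X_ge0 (HS 0).
have T0 : forall N, 0 <= Tt N := fun N => X_ge0 (HT N).
have E0 : forall n, 0 <= E n.
  move=> n; rewrite /E; apply: mulr_ge0 => //; apply: addr_ge0.
    by rewrite mulr_ge0 // sqr_ge0.
  by rewrite mulr_ge0.
have Ep : forall n : nat, 0 < E n + (n.+1%:R)^-1.
  by move=> n; apply: ltr_wpDl => //; rewrite invr_gt0.
exists eps; split; first by move=> n; rewrite /eps sqrtr_gt0.
split.
  apply/cvgrPdist_lt => e e0.
  have eta0 : 0 < e ^+ 2 / 64 by rewrite divr_gt0 // exprn_gt0.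
  have [N0 hN0] := tail_small f0 hs' eta0.
  have hT : forall N, (N0 <= N)%N -> Tt N <= e ^+ 2 / 64.
    move=> N hN; have := hN0 N hN; rewrite (esum_fin f0 (sub N)) lee_fin; exact.
  set x := (16 * Stot + 2) / e ^+ 2.
  have x0 : 0 <= x by rewrite divr_ge0 // ?exprn_ge0 ?ltW //; lra.
  have hK := archi_boundP x0.
  set K := Num.Def.archi_bound x in hK.
  exists (maxn (maxn K 1) (N0 * N0)) => // n /= hn.
  rewrite sub0r normrN ger0_norm ?sqrtr_ge0 //.
  rewrite -[e in _ < e](ger0_norm (ltW e0)) -sqrtr_sqr ltr_sqrt ?exprn_gt0 //.
  have nK : (K <= n)%N by lia.
  have n1 : (1 <= n)%N by lia.
  have nN : (N0 * N0 <= n)%N by lia.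
  have hNn : (N0 <= Nn n)%N.
    have : (PeanoNat.Nat.sqrt (N0 * N0)%coq_nat <= PeanoNat.Nat.sqrt n)%coq_nat.
      by apply: PeanoNat.Nat.sqrt_le_mono; lia.
    rewrite PeanoNat.Nat.sqrt_square /Nn; lia.
  have hsq : (Nn n * Nn n <= n)%N.
    have [h _] := PeanoNat.Nat.sqrt_spec n (PeanoNat.Nat.le_0_l n).
    rewrite /Nn; lia.
  have Tb := hT _ hNn.
  have npos : 0 < (n%:R : R) by rewrite ltr0n; lia.
  set y := (n%:R : R)^-1.
  have y0 : 0 < y by rewrite invr_gt0.
  have ny : n%:R * y = 1 by rewrite /y divff // gt_eqF.
  have hc : ((Nn n)%:Z%:~R / (n%:Z)%:~R : R) ^+ 2 <= y.
    have -> : ((Nn n)%:Z%:~R : R) = (Nn n)%:R by [].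
    have -> : ((n%:Z)%:~R : R) = n%:R by [].
    rewrite expr_div_n.
    have hle : ((Nn n)%:R : R) ^+ 2 <= n%:R by rewrite -natrX ler_nat expnS expn1.
    apply: le_trans (ler_wpM2r _ hle) _; first by rewrite invr_ge0 exprn_ge0 // ltW.
    rewrite /y le_eqVlt; apply/orP; left; apply/eqP; field; by rewrite pnatr_eq0; lia.
  have hcS : ((Nn n)%:Z%:~R / (n%:Z)%:~R : R) ^+ 2 * Stot <= y * Stot.
    exact: ler_wpM2r.
  have hy' : (n.+1%:R : R)^-1 <= y.
    by rewrite /y lef_pV2 ?posrE ?ler_nat // ltr0n.
  have hx : x < n%:R by apply: lt_le_trans hK _; rewrite ler_nat.
  have e2 : 0 < e ^+ 2 by rewrite exprn_gt0.
  have hx2 : 16 * Stot + 2 < n%:R * e ^+ 2 by rewrite /x ltr_pdivrMr // in hx.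
  have hx3 : (16 * Stot + 2) * y < e ^+ 2.
    have := hx2; rewrite -(ltr_pM2r y0) => h.
    by move: h; rewrite mulrAC ny mul1r.
  rewrite /E.
  have hx4 : 16 * (y * Stot) + 2 * y < e ^+ 2.
    have e' : (16 * Stot + 2) * y = 16 * (y * Stot) + 2 * y by ring.
    by rewrite -e'.
  apply: (@le_lt_trans _ _ (8 * (y * Stot + 4 * (e ^+ 2 / 64)) + y)).
    apply: lerD => //; apply: ler_wpM2l => //; apply: lerD => //; exact: ler_wpM2l.
  lra.
exists 1%N => // n /= n1.
have n0 : (0 < n%:Z)%R by lia.
have epsE : eps n ^+ 2 = E n + (n.+1%:R)^-1 by rewrite /eps sqr_sqrtr // ltW.
have hE : 8 * ((((Nn n)%:Z)%:~R / (n%:Z)%:~R) ^+ 2 * Stot + 4 * Tt (Nn n)) <= eps n ^+ 2.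
  by rewrite epsE lerDl invr_ge0.
split; apply: (Lsum_bound (N := (Nn n)%:Z)) => //; try exact: sqrtr_ge0; try exact: HS.
all: try by [left | right].
Qed.
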